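(* Let $u,v\in P$ with $u<v$. Then the relations $<$ and ${\rm Low}$ are primitive positive definable in $(P;{\rm Betw},\bot,u,v)$.
   Context: $(P;\leq)$ is the random partial order (Fraïssé limit of all finite partial orders); $x<y$ means $x\leq y\wedge x\neq y$; $x\bot y$ means $x,y$ incomparable; $z\bot xy$ abbreviates $z\bot x\wedge z\bot y$. ${\rm Betw}(x,y,z):=(x<y\wedge y<z)\vee(z<y\wedge y<x)$; ${\rm Low}(x,y,z):=(x<y\wedge z\bot xy)\vee(x<z\wedge y\bot xz)$. $(P;{\rm Betw},\bot,u,v)$ is the structure with relations ${\rm Betw}$, $\bot$ and constants (singleton unary relations) $u,v$. Primitive positive definable: definable by $\exists\bar y$ (conjunction of atomic formulas). *)

(* Defs.v *)
From Stdlib Require Import List Arith.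
Import ListNotations.

Section Poset.
Variable T : Type.
Variable le : T -> T -> Prop.

Definition lt (x y : T) : Prop := le x y /\ x <> y.
Definition inc (x y : T) : Prop := ~ le x y /\ ~ le y x.

Definition Betw (x y z : T) : Prop :=
  (lt x y /\ lt y z) \/ (lt z y /\ lt y x).
Definition Low (x y z : T) : Prop :=
  (lt x y /\ inc z x /\ inc z y) \/ (lt x z /\ inc y x /\ inc y z).

Definition is_partial_order : Prop :=
  (forall x, le x x) /\
  (forall x y, le x y -> le y x -> x = y) /\
  (forall x y z, le x y -> le y z -> le x z).

(** The random partial order: the Fraisse limit of the class of all finite
    partial orders, i.e. a countable partial order which is homogeneous and
    whose age is the class of all finite partial orders. *)
Definition random_partial_order : Prop :=
  is_partial_order /\
  (exists f : T -> nat, forall x y, f x = f y -> x = y) /\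
  (forall (n : nat) (r : nat -> nat -> Prop),
     (forall i, i < n -> r i i) ->
     (forall i j, i < n -> j < n -> r i j -> r j i -> i = j) ->
     (forall i j k, i < n -> j < n -> k < n -> r i j -> r j k -> r i k) ->
     exists a : nat -> T, forall i j, i < n -> j < n -> (r i j <-> le (a i) (a j))) /\
  (* homogeneity: every isomorphism between finite substructures
     (a_0..a_{n-1}) -> (b_0..b_{n-1}) extends to an automorphism *)
  (forall (n : nat) (a b : nat -> T),
     (forall i j, i < n -> j < n -> (le (a i) (a j) <-> le (b i) (b j))) ->
     exists (f g : T -> T),
       (forall x, g (f x) = x) /\ (forall x, f (g x) = x) /\
       (forall x y, le x y <-> le (f x) (f y)) /\
       (forall i, i < n -> f (a i) = b i)).

Inductive atom : Type :=
| AEq : nat -> nat -> atom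
| ABetw : nat -> nat -> nat -> atom
| AInc : nat -> nat -> atom
| AU : nat -> atom
| AV : nat -> atom.

Definition atom_holds (u v : T) (e : nat -> T) (a : atom) : Prop :=
  match a with
  | AEq i j => e i = e j
  | ABetw i j k => Betw (e i) (e j) (e k)
  | AInc i j => inc (e i) (e j)
  | AU i => e i = u
  | AV i => e i = v
  end.

(** A relation R of arity n (R only inspects x 0, ..., x (n-1)) is
    primitive positive definable in (T; Betw, inc, u, v) if there is a finite
    conjunction of atomic formulas phi such that R x holds iff there exist
    values of the remaining (existentially quantified) variables i >= n
    making all atoms of phi true. *)
Definition pp_definable (u v : T) (n : nat) (R : (nat -> T) -> Prop) : Prop :=
  exists phi : list atom,
    forall x : nat -> T,
      R x <->
      exists y : nat -> T,
        Forall (atom_holds u v (fun i => if i <? n then x i else y i)) phi.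

End Poset.
Arguments lt {T} le x y.
Arguments inc {T} le x y.
Arguments Betw {T} le x y z.
Arguments Low {T} le x y z.
Arguments random_partial_order {T} le.
Arguments pp_definable {T} le u v n R.

(* Main.v *)
Require Import Defs.
From Stdlib Require Import List Arith Lia Classical.
Import ListNotations.

Section S.
Variable T : Type.
Variable le : T -> T -> Prop.
Hypothesis HP : random_partial_order le.

Lemma refl x : le x x. Proof. destruct HP as [[h _] _]; auto. Qed.
Lemma antis x y : le x y -> le y x -> x = y. Proof. destruct HP as [[_ [h _]] _]; eauto. Qed.
Lemma trns x y z : le x y -> le y z -> le x z. Proof. destruct HP as [[_ [_ h]] _]; eauto. Qed.

Lemma ext (n : nat) (L : nat -> T) (Up Down : nat -> Prop) :
 (forall i j, i<n -> j<n -> L i = L j -> i = j) ->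
 (forall i j, i<n -> j<n -> le (L j) (L i) -> Up i -> Up j) ->
 (forall i j, i<n -> j<n -> le (L i) (L j) -> Down i -> Down j) ->
 (forall i j, i<n -> j<n -> Up i -> Down j -> le (L i) (L j)) ->
 (forall i, i<n -> Up i -> Down i -> False) ->
 exists z, forall i, i<n -> (le (L i) z <-> Up i) /\ (le z (L i) <-> Down i) /\ z <> L i.
Proof.
  intros Hinj HU HD HUD HUD'.
  destruct HP as [_ [_ [Hemb Hhom]]].
  set (r := fun i j => if i <? n then (if j <? n then le (L i) (L j) else Up i)
                      else (if j <? n then Down j else True)).
  destruct (Hemb (S n) r) as [a Ha].
  - intros i Hi; unfold r; destruct (Nat.ltb_spec i n); auto using refl.
  - intros i j Hi Hj; unfold r; destruct (Nat.ltb_spec i n); destruct (Nat.ltb_spec j n);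
      intros h1 h2; try lia.
    + apply Hinj; auto using antis.
    + exfalso; eauto.
    + exfalso; eauto.
  - intros i j k Hi Hj Hk; unfold r; destruct (Nat.ltb_spec i n); destruct (Nat.ltb_spec j n);
      destruct (Nat.ltb_spec k n); intros h1 h2; eauto using trns.
  - destruct (Hhom n a L) as [f [g [Hgf [Hfg [Hf Hfa]]]]].
    + intros i j Hi Hj. rewrite <- Ha by lia. unfold r.
      destruct (Nat.ltb_spec i n); destruct (Nat.ltb_spec j n); try lia; tauto.
    + exists (f (a n)). intros i Hi. rewrite <- (Hfa i Hi).
      assert (E1 : r i n <-> Up i).
      { unfold r. destruct (Nat.ltb_spec i n); destruct (Nat.ltb_spec n n); try lia; tauto. }
      assert (E2 : r n i <-> Down i).
      { unfold r. destruct (Nat.ltb_spec i n); destruct (Nat.ltb_spec n n); try lia; tauto. }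
      rewrite <- Hf, <- Hf, <- E1, <- E2, Ha, Ha by lia.
      split; [tauto|split; [tauto|]].
      intro E. apply (f_equal g) in E. rewrite !Hgf in E.
      apply (HUD' i Hi); [apply E1|apply E2]; apply Ha; try lia; rewrite E; apply refl.
Qed.

Ltac small := intros; repeat (match goal with i : nat |- _ => destruct i as [|i]; try lia end).

Lemma ext1_inc b : exists z, inc le z b.
Proof.
  destruct (ext 1 (fun _ => b) (fun _ => False) (fun _ => False)) as [z Hz];
    try (small; tauto).
  exists z. destruct (Hz 0) as [A [B _]]; [lia|]. unfold inc; tauto.
Qed.

Lemma ext_below1 b : exists z, lt le z b.
Proof.
  destruct (ext 1 (fun _ => b) (fun _ => False) (fun _ => True)) as [z Hz];
    try (small; tauto).
  exists z. destruct (Hz 0) as [A [B C]]; [lia|]. split; [tauto|auto].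
Qed.

Definition L2 (b0 b1 : T) := fun i => match i with 0 => b0 | _ => b1 end.
Definition P2 (P0 P1 : Prop) := fun i => match i with 0 => P0 | _ => P1 end.

Lemma ext2 b0 b1 U0 U1 D0 D1 :
  (1 < 2 -> 0 < 2 -> L2 b0 b1 0 = L2 b0 b1 1 -> False) ->
  (forall i j, i<2 -> j<2 -> le (L2 b0 b1 j) (L2 b0 b1 i) -> P2 U0 U1 i -> P2 U0 U1 j) ->
  (forall i j, i<2 -> j<2 -> le (L2 b0 b1 i) (L2 b0 b1 j) -> P2 D0 D1 i -> P2 D0 D1 j) ->
  (forall i j, i<2 -> j<2 -> P2 U0 U1 i -> P2 D0 D1 j -> le (L2 b0 b1 i) (L2 b0 b1 j)) ->
  (forall i, i<2 -> P2 U0 U1 i -> P2 D0 D1 i -> False) ->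
  exists z, ((le b0 z <-> U0) /\ (le z b0 <-> D0) /\ z <> b0) /\
            ((le b1 z <-> U1) /\ (le z b1 <-> D1) /\ z <> b1).
Proof.
  intros H1 H2 H3 H4 H5.
  destruct (ext 2 (L2 b0 b1) (P2 U0 U1) (P2 D0 D1)) as [z Hz]; auto.
  - small; auto. exfalso; apply H1; auto. exfalso; apply H1; auto.
  - exists z. split; [apply (Hz 0)|apply (Hz 1)]; lia.
Qed.

Ltac ext2_solve := small; simpl in *; try tauto; try (subst; tauto);
  try (subst; match goal with h: ~ le ?a ?a |- _ => exfalso; apply h, refl end);
  try (match goal with h: ?a <> ?b, h1 : le ?a ?b, h2 : le ?b ?a |- _ => exfalso; apply h, antis; auto end).

Lemma ext2_inc b0 b1 : b0 <> b1 -> exists z, inc le z b0 /\ inc le z b1.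
Proof.
  intro Hne. destruct (ext2 b0 b1 False False False False) as [z Hz]; try ext2_solve.
  exists z. unfold inc; tauto.
Qed.

Lemma ext2_above_inc b0 b1 : inc le b0 b1 -> exists z, lt le b0 z /\ lt le b1 z.
Proof.
  intros [n1 n2]. destruct (ext2 b0 b1 True True False False) as [z Hz]; try ext2_solve.
  - exists z. unfold lt; split; split; try tauto; intro E; subst; tauto.
Qed.

Lemma lt_irr a : lt le a a -> False. Proof. intros [_ h]; auto. Qed.

Lemma ext_between a b : lt le a b -> exists z, lt le a z /\ lt le z b.
Proof.
  intros [h1 h2]. destruct (ext2 a b True False False True) as [z Hz]; try ext2_solve.
  - exists z. unfold lt; split; split; try tauto; intro E; subst; tauto.
Qed.

Lemma ext_below2_inc a b : inc le a b -> exists z, lt le z a /\ lt le z b.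
Proof.
  intros [n1 n2]. destruct (ext2 a b False False True True) as [z Hz]; try ext2_solve.
  - exists z. unfold lt; split; split; try tauto; intro E; subst; tauto.
Qed.

Lemma ext_below_inc a b : inc le a b -> exists z, lt le z a /\ inc le z b.
Proof.
  intros [n1 n2]. destruct (ext2 a b False False True False) as [z Hz]; try ext2_solve.
  - exists z. unfold lt, inc; split; split; try tauto; intro E; subst; tauto.
Qed.

Lemma ext_above_inc a b : lt le a b -> exists z, lt le a z /\ inc le z b.
Proof.
  intros [h1 h2]. destruct (ext2 a b True False False False) as [z Hz]; try ext2_solve.
  - exists z. unfold lt, inc; split; split; try tauto; intro E; subst; tauto.
Qed.


Definition G (u v a b c d p q : T) :=
  Betw le a b p /\ Betw le c d p /\ inc le b d /\ Betw le c d q /\ Betw le u v q /\ inc le d v.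

Lemma lt_trans a b c : lt le a b -> lt le b c -> lt le a c.
Proof.
  intros [h1 h2] [h3 h4]. split; [eauto using trns|]. intro E; subst.
  apply h2; apply antis; auto.
Qed.

Ltac bdes := unfold Betw, inc, lt in *;
  repeat match goal with
  | H : _ /\ _ |- _ => destruct H
  | H : _ \/ _ |- _ => destruct H
  end.

Ltac contra := exfalso;
  first [ match goal with h: ?a <> ?b, h1 : le ?a ?b, h2 : le ?b ?a |- _ => apply h, antis; auto end
        | match goal with h: ?a <> ?b, h1 : le ?a ?c, h2 : le ?c ?b, h3 : le ?b ?a |- _ =>
            apply h, antis; eauto using trns end
        | match goal with h: ~ le ?a ?b, h1 : le ?a ?c, h2 : le ?c ?b |- _ => apply h; eauto using trns end
        | match goal with h: ~ le ?a ?b, h1 : le ?a ?c, h2 : le ?c ?d, h3 : le ?d ?b |- _ =>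
            apply h; eauto using trns end ].

Lemma G_sound u v a b c d p q : lt le u v -> G u v a b c d p q -> lt le a b.
Proof.
  intros Huv (H1 & H2 & H3 & H4 & H5 & H6).
  bdes; try contra; split; auto.
Qed.

Lemma G_complete u v a b : lt le u v -> lt le a b -> exists c d p q, G u v a b c d p q.
Proof.
  intros Huv Hab.
  assert (Hd : exists d, inc le d b /\ inc le d v).
  { destruct (classic (b = v)) as [E|E].
    - subst. destruct (ext1_inc v) as [d Hd]. eauto.
    - apply ext2_inc; auto. }
  destruct Hd as [d [Hdb Hdv]].
  destruct (ext_below1 d) as [c Hc].
  assert (Hbd : inc le b d) by (unfold inc in *; tauto).
  destruct (ext2_above_inc b d Hbd) as [p [Hbp Hdp]].
  assert (Hdv' : inc le d v) by auto.
  destruct (ext2_above_inc d v Hdv') as [q [Hdq Hvq]].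
  exists c, d, p, q. unfold G, Betw.
  repeat split; auto; unfold inc in *; tauto.
Qed.

Definition LS (x y z p q r s : T) :=
  inc le y z /\ Betw le p x q /\ lt le p y /\ lt le q z /\ Betw le p x r /\ inc le r z /\
  Betw le q x s /\ inc le s y.

Lemma LS_sound x y z p q r s : LS x y z p q r s -> Low le x y z.
Proof.
  unfold LS, Low. intros H. bdes.
  all: try contra.
  - left. repeat split; try (eauto using trns; fail); intro; first [contra | subst; contra].
  - right. repeat split; try (eauto using trns; fail); intro; first [contra | subst; contra].
Qed.

Lemma LS_sym x y z p q r s : LS x z y p q r s -> LS x y z q p s r.
Proof. unfold LS, Betw, inc. tauto. Qed.

Lemma LS_complete1 x y z : lt le x y -> inc le z x -> inc le z y -> exists p q r s, LS x y z p q r s.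
Proof.
  intros Hxy Hzx Hzy.
  assert (Hxz : inc le x z) by (unfold inc in *; tauto).
  destruct (ext_between x y Hxy) as [p [Hxp Hpy]].
  destruct (ext_below2_inc x z Hxz) as [q [Hqx Hqz]].
  destruct (ext_below_inc x z Hxz) as [r [Hrx Hrz]].
  destruct (ext_above_inc x y Hxy) as [s [Hxs Hsy]].
  exists p, q, r, s. unfold LS, Betw. unfold inc in *; tauto.
Qed.

Lemma LS_complete x y z : Low le x y z -> exists p q r s, LS x y z p q r s.
Proof.
  intros [[H1 [H2 H3]]|[H1 [H2 H3]]].
  - apply LS_complete1; auto.
  - destruct (LS_complete1 x z y H1 H2 H3) as (p & q & r & s & H).
    exists q, p, s, r. apply LS_sym; auto.
Qed.

End S.

Theorem lemma60 (T : Type) (le : T -> T -> Prop)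
  (HP : random_partial_order le) (u v : T) (Huv : lt le u v) :
  pp_definable le u v 2 (fun x => lt le (x 0) (x 1)) /\
  pp_definable le u v 3 (fun x => Low le (x 0) (x 1) (x 2)).
Proof.
  split.
  - exists [AU 6; AV 7; ABetw 0 1 4; ABetw 2 3 4; AInc 1 3; ABetw 2 3 5; ABetw 6 7 5; AInc 3 7].
    intros x. split.
    + intro H. destruct (G_complete T le HP u v (x 0) (x 1) Huv H) as (c&d&p&q&Hg).
      exists (fun i => match i with 2=>c|3=>d|4=>p|5=>q|6=>u|_=>v end).
      unfold G in Hg. repeat apply Forall_cons; try apply Forall_nil; simpl; tauto.
    + intros [y Hy]. rewrite !Forall_cons_iff in Hy. simpl in Hy.
      destruct Hy as (E1 & E2 & H1 & H2 & H3 & H4 & H5 & H6 & _).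
      apply (G_sound T le HP u v _ _ (y 2) (y 3) (y 4) (y 5) Huv).
      unfold G. rewrite <- E1, <- E2. tauto.
  - exists [AU 7; AV 8; AInc 1 2; ABetw 3 0 4; ABetw 3 0 5; AInc 5 2; ABetw 4 0 6; AInc 6 1;
            ABetw 3 1 11; ABetw 9 10 11; AInc 1 10; ABetw 9 10 12; ABetw 7 8 12; AInc 10 8;
            ABetw 4 2 15; ABetw 13 14 15; AInc 2 14; ABetw 13 14 16; ABetw 7 8 16; AInc 14 8].
    intros x. split.
    + intro H. destruct (LS_complete T le HP _ _ _ H) as (p&q&r&s&Hs).
      pose proof Hs as Hs'. unfold LS in Hs'.
      destruct Hs' as (_ & _ & Hpy & Hqz & _).
      destruct (G_complete T le HP u v p (x 1) Huv Hpy) as (c1&d1&p1&q1&G1).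
      destruct (G_complete T le HP u v q (x 2) Huv Hqz) as (c2&d2&p2&q2&G2).
      exists (fun i => match i with 3=>p|4=>q|5=>r|6=>s|7=>u|8=>v
                     |9=>c1|10=>d1|11=>p1|12=>q1|13=>c2|14=>d2|15=>p2|_=>q2 end).
      unfold G, LS in *. repeat apply Forall_cons; try apply Forall_nil; simpl; tauto.
    + intros [y Hy]. rewrite !Forall_cons_iff in Hy. simpl in Hy.
      destruct Hy as (E1 & E2 & H1 & H2 & H3 & H4 & H5 & H6 &
                      A1 & A2 & A3 & A4 & A5 & A6 & B1 & B2 & B3 & B4 & B5 & B6 & _).
      rewrite E1, E2 in *.
      apply (LS_sound T le HP _ _ _ (y 3) (y 4) (y 5) (y 6)).
      assert (L1 : lt le (y 3) (x 1)).
      { apply (G_sound T le HP u v _ _ (y 9) (y 10) (y 11) (y 12) Huv). unfold G; tauto. }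
      assert (L2 : lt le (y 4) (x 2)).
      { apply (G_sound T le HP u v _ _ (y 13) (y 14) (y 15) (y 16) Huv). unfold G; tauto. }
      unfold LS; tauto.
Qed.
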